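(* Let $A\in\mathbb{R}^{m\times N}$ and $K\subseteq[N]$. The following are equivalent: (i) $\ker(A)\cap N_K\cap H_K=\{0\}$; (ii) $\mathbb{1}_K$ is the unique solution of $(P_{\mathrm{bin}})$ with $b=A\mathbb{1}_K$. Moreover, if one of these holds, then $\mathbb{1}_K$ is the unique vector of minimal $\|\cdot\|_0$ among all $x\in\{0,1\}^N$ with $Ax=A\mathbb{1}_K$.
   Context: $[N]=\{1,\dots,N\}$; $\mathbb{1}_K$ is the vector with entries $1$ on $K$ and $0$ elsewhere; $K^C=[N]\setminus K$; for $w\in\mathbb{R}^N$ and $S\subseteq[N]$, $w_S$ denotes the vector agreeing with $w$ on $S$ and zero elsewhere; $\|x\|_0$ is the number of nonzero entries. $N_K=\{w\in\mathbb{R}^N:\|w_K\|_1\ge\|w_{K^C}\|_1\}$ and $H_K=\{w\in\mathbb{R}^N: w_i\le 0 \text{ for } i\in K,\ w_i\ge 0\text{ for } i\in K^C\}$. $(P_{\mathrm{bin}})$ is the program $\min\|x\|_1$ subject to $Ax=b$ and $x\in[0,1]^N$; ''unique solution'' means unique minimizer. *)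

(* Defs.v *)
From mathcomp Require Import all_boot all_order all_algebra.
From mathcomp Require Import reals.
Set Implicit Arguments. Unset Strict Implicit. Unset Printing Implicit Defensive.
Import Order.TTheory GRing.Theory Num.Theory.
Local Open Scope ring_scope.

(* Vectors in R^N are column vectors 'cV[R]_N ; [N] is 'I_N (0-based). *)
Section Defs.
Variable R : realType.
Variable N : nat.

Definition indic (K : {set 'I_N}) : 'cV[R]_N :=
  \col_i (if i \in K then 1 else 0).

Definition restr (w : 'cV[R]_N) (S : {set 'I_N}) : 'cV[R]_N :=
  \col_i (if i \in S then w i 0 else 0).

Definition l1norm (x : 'cV[R]_N) : R := \sum_i `|x i 0|.

Definition l0norm (x : 'cV[R]_N) : nat := #|[set i | x i 0 != 0]|.

Definition inNK (K : {set 'I_N}) (w : 'cV[R]_N) : Prop :=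
  l1norm (restr w (~: K)) <= l1norm (restr w K).

Definition inHK (K : {set 'I_N}) (w : 'cV[R]_N) : Prop :=
  forall i, (i \in K -> w i 0 <= 0) /\ (i \notin K -> 0 <= w i 0).

Definition Pbin_feasible m (A : 'M[R]_(m, N)) (b : 'cV[R]_m) (x : 'cV[R]_N) : Prop :=
  A *m x = b /\ forall i, 0 <= x i 0 <= 1.

Definition Pbin_unique_solution m (A : 'M[R]_(m, N)) (b : 'cV[R]_m)
    (x0 : 'cV[R]_N) : Prop :=
  Pbin_feasible A b x0 /\
  (forall x, Pbin_feasible A b x -> l1norm x0 <= l1norm x) /\
  (forall x, Pbin_feasible A b x -> l1norm x = l1norm x0 -> x = x0).

Definition binary (x : 'cV[R]_N) : Prop := forall i, x i 0 = 0 \/ x i 0 = 1.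

End Defs.

(* Main.v *)
Require Import Defs.
From mathcomp Require Import all_boot all_order all_algebra.
From mathcomp Require Import reals.
From mathcomp Require Import lra.
Import Order.TTheory GRing.Theory Num.Theory.
Local Open Scope ring_scope.

Section H.
Variable R : realType.
Variable N : nat.
Variable K : {set 'I_N}.

Lemma key (w : 'cV[R]_N) : inHK K w -> (forall i, i \in K -> -1 <= w i 0) ->
  l1norm (indic R K + w) + l1norm (restr w K) =
  l1norm (indic R K) + l1norm (restr w (~: K)).
Proof.
move=> hH hm; rewrite /l1norm -!big_split /=; apply: eq_bigr => i _.
rewrite !mxE in_setC; have [h1 h2] := hH i.
case: (boolP (i \in K)) => iK /=.
  have := h1 iK; have := hm i iK => a b.
  rewrite normr0 addr0 normr1 ger0_norm; last by rewrite -lerBlDl sub0r.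
  rewrite ler0_norm // addrK //.
by rewrite normr0 !add0r addr0.
Qed.

Lemma restr_scale (t : R) (w : 'cV[R]_N) (S : {set 'I_N}) : 0 <= t ->
  l1norm (restr (t *: w) S) = t * l1norm (restr w S).
Proof.
move=> t0; rewrite /l1norm mulr_sumr; apply: eq_bigr => i _.
rewrite !mxE; case: (i \in S); last by rewrite normr0 mulr0.
by rewrite normrM ger0_norm.
Qed.

Lemma l1_ge0 (x : 'cV[R]_N) : 0 <= l1norm x.
Proof. by apply: sumr_ge0 => i _. Qed.

Lemma coord_le (w : 'cV[R]_N) i : `|w i 0| <= l1norm w.
Proof.
rewrite /l1norm (bigD1 i) //= lerDl; by apply: sumr_ge0 => j _.
Qed.

Lemma l0_l1 (x : 'cV[R]_N) : binary x -> (l0norm x)%:R = l1norm x.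
Proof.
move=> hb; rewrite /l1norm /l0norm (bigID (fun i => x i 0 != 0)) /=.
rewrite [X in _ + X]big1; last by move=> i /negPn/eqP ->; rewrite normr0.
rewrite addr0 (eq_bigr (fun _ => 1)); last first.
  by move=> i /negPf; case: (hb i) => ->; rewrite ?eqxx // normr1.
rewrite sumr_const; congr (_ *+ _); apply: eq_card => i; by rewrite inE.
Qed.

End H.

Theorem theorem2p3 (R : realType) (m N : nat) (A : 'M[R]_(m, N))
    (K : {set 'I_N}) :
  ((forall w : 'cV[R]_N, A *m w = 0 -> inNK K w -> inHK K w -> w = 0) <->
   Pbin_unique_solution A (A *m indic R K) (indic R K)) /\
  ((forall w : 'cV[R]_N, A *m w = 0 -> inNK K w -> inHK K w -> w = 0) ->
   binary (indic R K) /\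
   forall x : 'cV[R]_N, binary x -> A *m x = A *m indic R K ->
     (l0norm (indic R K) <= l0norm x)%N /\
     (l0norm x = l0norm (indic R K) -> x = indic R K)).
Proof.
set e := indic R K.
have efeas : Pbin_feasible A (A *m e) e.
  split=> // i; rewrite /e /indic mxE; case: (i \in K) => //; by rewrite lexx ler01.
have one : (forall w : 'cV[R]_N, A *m w = 0 -> inNK K w -> inHK K w -> w = 0) ->
   Pbin_unique_solution A (A *m e) e.
  move=> hi; split=> //.
  have fact : forall x, Pbin_feasible A (A *m e) x ->
    l1norm x + l1norm (restr (x - e) K) = l1norm e + l1norm (restr (x - e) (~: K)).
    move=> x [_ hx].
    have -> : l1norm x = l1norm (e + (x - e)) by rewrite addrC subrK.
    apply: key.
      move=> i; rewrite /e /indic !mxE; have /andP[a b] := hx i.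
      by split=> iK; [rewrite iK subr_le0 | rewrite (negPf iK) subr0].
    move=> i iK; rewrite /e /indic !mxE iK; have /andP[a b] := hx i.
    by rewrite lerBrDr addrC subrr.
  have Hw : forall x, Pbin_feasible A (A *m e) x -> inNK K (x - e) -> x = e.
    move=> x hx hN; apply/eqP; rewrite -subr_eq0; apply/eqP; apply: hi => //.
      by case: hx => hA _; rewrite mulmxBr hA subrr.
    move=> i; rewrite /e /indic !mxE; case: hx => _ hx; have /andP[a b] := hx i.
    by split=> iK; [rewrite iK subr_le0 | rewrite (negPf iK) subr0].
  split.
    move=> x hx; have F := fact x hx.
    case: (lerP (l1norm (restr (x - e) (~: K))) (l1norm (restr (x - e) K))) => c.
      by rewrite (Hw x hx c).
    apply/ltW; rewrite -(ltrD2r (l1norm (restr (x - e) K))) F; by rewrite ltrD2l.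
  move=> x hx heq; apply: Hw => //; rewrite /inNK.
  by have := fact x hx; rewrite heq => /addrI ->.
split; first split=> //.
  move=> [ef [hmin huniq]] w hA hN hH.
  set t : R := (1 + l1norm w)^-1.
  have t0 : 0 < t by rewrite invr_gt0 ltr_pwDl // l1_ge0.
  have tb : forall i, t * `|w i 0| <= 1.
    move=> i; rewrite mulrC ler_pdivrMr ?mul1r; last by rewrite ltr_pwDl // l1_ge0.
    by rewrite (le_trans (@coord_le _ _ w i)) // lerDr.
  have hH' : inHK K (t *: w).
    move=> i; rewrite mxE; have [a b] := hH i; split=> iK.
      by rewrite pmulr_rle0 // a.
    by rewrite pmulr_rge0 // b.
  have feas : Pbin_feasible A (A *m e) (e + t *: w).
    split; first by rewrite mulmxDr -scalemxAr hA scaler0 addr0.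
    move=> i; rewrite /e /indic !mxE; have [a b] := hH i; have := tb i.
    case: (boolP (i \in K)) => iK tb'.
      have wn := a iK; rewrite ler0_norm // mulrN in tb'.
      apply/andP; split; first by lra.
      by nra.
    have wp := b iK; rewrite ger0_norm // in tb'.
    rewrite add0r; apply/andP; split; nra.
  have lo : forall i, i \in K -> -1 <= (t *: w) i 0.
    move=> i iK; have := tb i; rewrite mxE; have [a _] := hH i.
    by rewrite ler0_norm ?a // mulrN lerNl.
  move: (@key _ _ _ _ hH' lo); rewrite !restr_scale ?ltW // => E.
  have le1 : l1norm (e + t *: w) <= l1norm e.
    rewrite -(lerD2r (t * l1norm (restr w K))) E lerD2l ler_pM2l //.
  have eq1 : l1norm (e + t *: w) = l1norm e.
    by apply/eqP; rewrite eq_le le1 hmin.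
  have h := huniq _ feas eq1.
  have : t *: w = 0 by rewrite -(addKr e (t *: w)) h addNr.
  by move/eqP; rewrite scaler_eq0 gt_eqF //= => /eqP.
move=> hi; have [ef [hmin huniq]] := one hi.
split; first by move=> i; rewrite /e /indic mxE; case: (i \in K); [right|left].
move=> x hb hx.
have fx : Pbin_feasible A (A *m e) x.
  split=> // i; case: (hb i) => ->; by rewrite lexx ler01.
have be : binary e by move=> i; rewrite /e /indic mxE; case: (i \in K); [right|left].
split.
  by rewrite -(ler_nat R) !l0_l1 // hmin.
move=> h; apply: huniq => //; by rewrite -!l0_l1 // h.
Qed.
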